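(* The maps $\mathbf{W}_+:R_+\to\mathbb{R}^2$ and $\mathbf{W}_-:R_-\to\mathbb{R}^2$ given by $$\mathbf{W}_\pm(x,y)=\left(\frac{1+\omega_\pm}{1-\omega_\pm}\,x,\ \frac{|\omega_\pm|}{1+\omega_\pm}\,y\right),\qquad \omega_\pm=\omega_\pm(x,y),$$ are orientation preserving homeomorphisms onto their respective images (which are contained in $R$).
   Context: For $x>0$, $y\in\mathbb{R}$ let $r_1^2=4+x^2+4x^2y^2$, $\Delta=((x+2)^2+8x^2y^2)((x-2)^2+8x^2y^2)$ and $\omega_\pm(x,y)=\frac{x^2-4\pm\sqrt{\Delta}}{2r_1^2}$. Let $R=\{(x,y): x>0,\ 4-4y^2-x^2y^2-8x^2y^4\ge 0\}$, $R_+=R\cap((0,2]\times\mathbb{R})$, $R_-=R\cap([2,\infty)\times\mathbb{R})$. On $R_+$ one has $0\le\omega_+<1$ and on $R_-$ one has $-1<\omega_-\le 0$. *)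

(* Defs.v *)
From HB Require Import structures.
From mathcomp Require Import all_boot all_order all_algebra.
From mathcomp Require Import all_classical all_reals all_analysis.
Set Implicit Arguments. Unset Strict Implicit. Unset Printing Implicit Defensive.
Import Order.TTheory GRing.Theory Num.Theory.
Import numFieldNormedType.Exports.
Local Open Scope classical_set_scope.
Local Open Scope ring_scope.

Definition r1sq (R : realType) (x y : R) : R := 4 + x ^+ 2 + 4 * x ^+ 2 * y ^+ 2.

Definition Delta (R : realType) (x y : R) : R :=
  ((x + 2) ^+ 2 + 8 * x ^+ 2 * y ^+ 2) * ((x - 2) ^+ 2 + 8 * x ^+ 2 * y ^+ 2).

Definition omega_plus (R : realType) (x y : R) : R :=
  (x ^+ 2 - 4 + Num.sqrt (Delta x y)) / (2 * r1sq x y).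
Definition omega_minus (R : realType) (x y : R) : R :=
  (x ^+ 2 - 4 - Num.sqrt (Delta x y)) / (2 * r1sq x y).

Definition regionR (R : realType) : set (R * R) :=
  [set p | 0 < p.1 /\
           0 <= 4 - 4 * p.2 ^+ 2 - p.1 ^+ 2 * p.2 ^+ 2 - 8 * p.1 ^+ 2 * p.2 ^+ 4].
Definition regionR_plus (R : realType) : set (R * R) :=
  [set p | @regionR R p /\ p.1 <= 2].
Definition regionR_minus (R : realType) : set (R * R) :=
  [set p | @regionR R p /\ 2 <= p.1].

Definition Wmap (R : realType) (om : R -> R -> R) (p : R * R) : R * R :=
  let w := om p.1 p.2 in
  ((1 + w) / (1 - w) * p.1, `|w| / (1 + w) * p.2).
Definition W_plus (R : realType) := Wmap (@omega_plus R).
Definition W_minus (R : realType) := Wmap (@omega_minus R).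

Definition jac_det (R : realType) (f : R * R -> R * R) (p : R * R) : R :=
  let e1 := 'd f p (1, 0) in
  let e2 := 'd f p (0, 1) in
  e1.1 * e2.2 - e2.1 * e1.2.

Definition orient_pres_homeo_onto_image (R : realType)
    (A : set (R * R)) (f : R * R -> R * R) : Prop :=
  [/\ {within A, continuous f},
      set_inj A f,
      (exists g : R * R -> R * R,
          (forall p, A p -> g (f p) = p) /\ {within f @` A, continuous g})
    & (forall p, interior A p -> differentiable f p /\ 0 <= jac_det f p)].

(* Main.v *)
Require Import Defs.
From HB Require Import structures.
From mathcomp Require Import all_boot all_order all_algebra.
From mathcomp Require Import all_classical all_reals all_analysis.
From mathcomp Require Import lra ring.
Import Order.TTheory GRing.Theory Num.Theory.
Import numFieldNormedType.Exports.
Local Open Scope classical_set_scope.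
Local Open Scope ring_scope.

Lemma mle {R : realType} {a b c : R} : 0 <= c -> a <= b -> c * a <= c * b.
Proof. by move=> c0 ab; apply: ler_wpM2l. Qed.

Lemma imgp (R : realType) (t x u : R) :
  0 < x -> x <= 2 -> 0 <= u -> 1 <= t ->
  0 <= 4 - 4 * u - x^+2 * u - 8 * x^+2 * u^+2 ->
  (t - 1) * (4 * t - x^+2) = 8 * t * (x^+2 * u) ->
  0 <= 16 * t^+2 - 4 * (t-1)^+2 * u - t^+2 * (t-1)^+2 * (x^+2*u) - 2 * (t-1)^+4 * (x^+2*u) * u.
Proof.
move=> x0 x2 u0 t1 g E.
have x4 : x^+2 <= 4 by nra.
have m0 : 0 <= x^+2 * u by nra.
have m4 : x^+2 * u <= 4 * u by nra.
have g' : 0 <= 4 - 4 * u - (x^+2 * u) - 8 * (x^+2 * u) * u by lra.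
move: g' E m0 m4; set m := x^+2 * u => g' E m0 m4.
have m1 : m <= 1 by nra.
have tm : (t-1)^+2 <= 2 * t * m by nra.
have mu : m * u * (4 + 8 * m) <= (4 - m) * m by nra.
have mu4 : m * u <= 1/4 by nra.
have t4 : t <= 4 by nra.
have mu0 : 0 <= m * u by nra.
have a := mle (mulr_ge0 (ler0n _ 4) u0) tm.
have b := mle (mulr_ge0 (exprn_ge0 2 (le_trans ler01 t1)) m0) tm.
have s0 : 0 <= (t-1)^+2 by apply: sqr_ge0.
have c0 := mle s0 tm.
have c1 : (t-1)^+2 * (t-1)^+2 <= (2 * t * m) * (2 * t * m) := ler_pM s0 s0 tm tm.
have c := mle (mulr_ge0 (ler0n _ 2) mu0) c1.
have d1 := mle (mulr_ge0 (ler0n _ 8) (le_trans ler01 t1)) mu4.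
have m21 : m^+2 <= 1 by nra.
have d2 := mle (mulr_ge0 (ler0n _ 2) (exprn_ge0 3 (le_trans ler01 t1))) m21.
have t2 : t^+3 <= 4 * t^+2 by nra.
have d3 := mle (mulr_ge0 (ler0n _ 8) (mulr_ge0 (exprn_ge0 2 (le_trans ler01 t1)) (exprn_ge0 2 m0))) mu4.
have e : (t-1)^+4 = (t-1)^+2 * (t-1)^+2 by ring.
rewrite e.
have tt : t <= t^+2 by nra.
have m2t := mle (exprn_ge0 2 (le_trans ler01 t1)) m21.
rewrite /m in a b c d1 d2 d3 m2t E *.
lra.
Qed.


Lemma mle3 {R : realType} {a b c : R} : 0 <= c -> a <= b -> c * a <= c * b.
Proof. by move=> c0 ab; apply: ler_wpM2l. Qed.

Lemma imgm (R : realType) (t x u : R) :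
  2 <= x -> 0 <= u -> 0 < t -> t <= 1 ->
  0 <= 4 - 4 * u - x^+2 * u - 8 * x^+2 * u^+2 ->
  (t - 1) * (4 * t - x^+2) = 8 * t * (x^+2 * u) ->
  0 <= 16 * t^+2 - 4 * (t-1)^+2 * u - t^+2 * (t-1)^+2 * (x^+2*u) - 2 * (t-1)^+4 * (x^+2*u) * u.
Proof.
move=> x2 u0 t0 t1 g E.
have x4 : 4 <= x^+2 by nra.
have m0 : 0 <= x^+2 * u by nra.
have m4 : 4 * u <= x^+2 * u by nra.
have g' : 0 <= 4 - 4 * u - (x^+2 * u) - 8 * (x^+2 * u) * u by lra.
have u4 : u <= 1/4 by nra.
have F : (1-t)^+2 * x^+2 <= 8 * t * (x^+2 * u).
  rewrite -E.
  have : 0 <= 1 - t by lra.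
  have : 4 * t <= x^+2 * t by nra.
  nra.
have tu : (1-t)^+2 <= 8 * t * u.
  have x0 : 0 < x^+2 by nra.
  have : (1-t)^+2 * x^+2 <= (8 * t * u) * x^+2 by rewrite -mulrA [u * _]mulrC; lra.
  by rewrite ler_pM2r.
move: g' E m0 m4 F; set m := x^+2 * u => g' E m0 m4 F.
have mu : m * u <= 1/4 by nra.
have mu0 : 0 <= m * u by nra.
have t6 : 1/6 <= t by nra.
have s0 : 0 <= (1-t)^+2 by apply: sqr_ge0.
have a := mle3 (mulr_ge0 (ler0n _ 4) u0) tu.
have a2 : 4 * u * (8 * t * u) <= 2 * t by nra.
have b := mle3 (mulr_ge0 (exprn_ge0 2 (ltW t0)) m0) tu.
have b2 : t^+2 * m * (8 * t * u) <= 2 * t^+2.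
  have : t^+3 <= t^+2 by nra.
  have : 0 <= t^+3 by nra.
  nra.
have tu0 : 0 <= 8 * t * u by nra.
have c1 : (1-t)^+2 * (1-t)^+2 <= (8 * t * u) * (8 * t * u) := ler_pM s0 s0 tu tu.
have c := mle3 (mulr_ge0 (ler0n _ 2) mu0) c1.
have c2 : 2 * (m * u) * ((8 * t * u) * (8 * t * u)) <= 2 * t^+2.
  have h1 : u^+2 <= 1/16 by nra.
  have h2 : (8 * t * u) * (8 * t * u) = 64 * t^+2 * u^+2 by ring.
  have h3 := mle3 (exprn_ge0 2 (ltW t0)) h1.
  have h4 : 0 <= (8 * t * u) * (8 * t * u) by nra.
  have h5 := ler_pM mu0 h4 mu (le_refl ((8 * t * u) * (8 * t * u))).
  rewrite h2 in h5 h4 *.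
  lra.
have tt : t <= 6 * t^+2 by have h := mle3 (ltW t0) t6; rewrite expr2; lra.
have e : (t-1)^+4 = (1-t)^+2 * (1-t)^+2 by ring.
have e2 : (t-1)^+2 = (1-t)^+2 by ring.
rewrite e e2.
rewrite /m in a a2 b b2 c c2 E *.
lra.
Qed.

Set Implicit Arguments.

Section Comb.
Context {R : realType}.
Notation V := (R * R)%type.
Implicit Types (f g df dg : V -> R) (p : V).

Lemma id_d p f df : is_diff p f df -> differentiable f p.
Proof. by case. Qed.
Lemma id_v p f df : is_diff p f df -> 'd f p = df :> (V -> R).
Proof. by case. Qed.

Lemma idC p (c : R) : is_diff p (fun _ : V => c) (fun _ => 0).
Proof. exact: is_diff_cst. Qed.

Lemma idD p f g df dg : is_diff p f df -> is_diff p g dg ->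
  is_diff p (fun q => f q + g q) (fun v => df v + dg v).
Proof. by move=> a b; have := is_diffD a b. Qed.

Lemma idB p f g df dg : is_diff p f df -> is_diff p g dg ->
  is_diff p (fun q => f q - g q) (fun v => df v - dg v).
Proof. by move=> a b; have := is_diffB a b. Qed.

Lemma idM p f g df dg : is_diff p f df -> is_diff p g dg ->
  is_diff p (fun q => f q * g q) (fun v => f p * dg v + g p * df v).
Proof. by move=> a b; have := is_diffM a b. Qed.

Lemma idV p f df : f p != 0 -> is_diff p f df ->
  is_diff p (fun q => (f q)^-1) (fun v => - df v / (f p) ^+ 2).
Proof.
move=> fp a; apply: DiffDef.
  exact: (differentiableV (id_d a) fp).
rewrite (diffV (id_d a) fp).
apply/funext => v /=; rewrite (id_v a) /=.
change (- f p ^- 2 * df v = - df v / f p ^+ 2).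
by rewrite !mulNr mulrC.
Qed.

Definition pfst (q : V) : R := q.1.
Definition psnd (q : V) : R := q.2.
Lemma pfst_linear : linear pfst.
Proof. by move=> c [x1 y1] [x2 y2]. Qed.
Lemma psnd_linear : linear psnd.
Proof. by move=> c [x1 y1] [x2 y2]. Qed.
HB.instance Definition _ := GRing.isLinear.Build R V R _ pfst pfst_linear.
HB.instance Definition _ := GRing.isLinear.Build R V R _ psnd psnd_linear.
Lemma pfst_cont : continuous pfst.
Proof. by move=> q; apply: cvg_fst. Qed.
Lemma psnd_cont : continuous psnd.
Proof. by move=> q; apply: cvg_snd. Qed.

Lemma idfst p : is_diff p (fun q : V => q.1) (fun v => v.1).
Proof.
apply: DiffDef; first exact: (@linear_differentiable _ _ _ pfst _ pfst_cont).
exact: (@diff_lin R _ _ pfst p pfst_cont).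
Qed.
Lemma idsnd p : is_diff p (fun q : V => q.2) (fun v => v.2).
Proof.
apply: DiffDef; first exact: (@linear_differentiable _ _ _ psnd _ psnd_cont).
exact: (@diff_lin R _ _ psnd p psnd_cont).
Qed.

Lemma idX2 p f df : is_diff p f df ->
  is_diff p (fun q => f q ^+ 2) (fun v => f p * df v + f p * df v).
Proof. by move=> a; have := idM a a. Qed.

Lemma idsqrt p f df : 0 < f p -> is_diff p f df ->
  is_diff p (fun q => Num.sqrt (f q)) (fun v => df v / (2 * Num.sqrt (f p))).
Proof.
move=> fp a.
have ds : differentiable (@Num.sqrt R) (f p).
  by apply/derivable1_diffP; apply: ex_derive; apply: is_derive1_sqrt.
have e : 'd (@Num.sqrt R) (f p) = (fun h => h * (2 * Num.sqrt (f p))^-1) :> (R -> R).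
  rewrite diff1E // derive1E derive_sqrt //.
apply: DiffDef.
  by apply: (differentiable_comp (id_d a) ds).
have := diff_comp (id_d a) ds.
rewrite /comp => ->; rewrite e (id_v a).
by apply/funext => v.
Qed.

Lemma diff_pair2 p f1 f2 df1 df2 : is_diff p f1 df1 -> is_diff p f2 df2 ->
  differentiable (fun q => (f1 q, f2 q)) p.
Proof. move=> a b; exact: differentiable_pair (id_d a) (id_d b). Qed.

Lemma jac_pair p f1 f2 df1 df2 : is_diff p f1 df1 -> is_diff p f2 df2 ->
  jac_det (fun q => (f1 q, f2 q)) p =
    df1 (1, 0) * df2 (0, 1) - df1 (0, 1) * df2 (1, 0).
Proof.
move=> a b.
rewrite /jac_det diff_pair ?(id_d a) ?(id_d b) //= (id_v a) (id_v b).
done.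
Qed.

Lemma id0 p f df : is_diff p f df -> (forall q, f q = 0) -> forall v, df v = 0.
Proof.
move=> a h v.
have e : f = (fun _ => 0) by apply/funext.
have := id_v a; rewrite e diff_cst => <-. done.
Qed.

End Comb.

Section Jac.
Variable R : realType.
Notation V := (R * R)%type.

Lemma jac_gen (p : V) (w dw : V -> R) (eps : R) :
  is_diff p w dw ->
  (forall q : V, r1sq q.1 q.2 * w q ^+ 2 - (q.1 ^+ 2 - 4) * w q - 4 * q.1 ^+ 2 * q.2 ^+ 2 = 0) ->
  1 - w p != 0 -> 1 + w p != 0 ->
  2 * r1sq p.1 p.2 * w p - (p.1 ^+ 2 - 4) != 0 ->
  let F := fun q : V => ((1 + w q) / (1 - w q) * q.1, eps * w q / (1 + w q) * q.2) in
  differentiable F p /\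
  jac_det F p * ((2 * r1sq p.1 p.2 * w p - (p.1 ^+ 2 - 4)) * (1 - w p) ^+ 2 * (1 + w p)) =
  eps * (w p * (1 - w p ^+ 2) * (2 * r1sq p.1 p.2 * w p - (p.1 ^+ 2 - 4))
         + 8 * p.1 ^+ 2 * p.2 ^+ 2 * (1 - w p ^+ 2) * (1 + w p)
         + 4 * p.1 ^+ 2 * w p ^+ 2 * (1 - w p)).
Proof.
move=> Hw HP h1 h2 hD F.
have H1 := idM (idM (idD (idC p 1) Hw) (idV h1 (idB (idC p 1) Hw))) (idfst p).
have H2 := idM (idM (idM (idC p eps) Hw) (idV h2 (idD (idC p 1) Hw))) (idsnd p).
have R1 := idD (idD (idC p 4) (idX2 (idfst p))) (idM (idM (idC p 4) (idX2 (idfst p))) (idX2 (idsnd p))).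
have HPf := idB (idB (idM R1 (idX2 Hw)) (idM (idB (idX2 (idfst p)) (idC p 4)) Hw)) (idM (idM (idC p 4) (idX2 (idfst p))) (idX2 (idsnd p))).
have Ea := id0 HPf HP (1, 0).
have Eb := id0 HPf HP (0, 1).
split; first exact: diff_pair2 H1 H2.
rewrite /F (jac_pair H1 H2) /=.
move: Ea Eb h1 h2 hD => /=; rewrite /r1sq.
set a := dw (1, 0); set b := dw (0, 1); set u := w p; set x := p.1; set y := p.2.
move=> Ea Eb h1 h2 hD.
set D := 2 * (4 + x ^+ 2 + 4 * x ^+ 2 * y ^+ 2) * u - (x ^+ 2 - 4) in hD *.
have Ea' : D * a = - ((2 * x + 8 * x * y ^+ 2) * u ^+ 2 - 2 * x * u - 8 * x * y ^+ 2).
  apply/eqP; rewrite -subr_eq0; apply/eqP; rewrite -[RHS]Ea /D; ring.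
have Eb' : D * b = - (8 * x ^+ 2 * y * (u ^+ 2 - 1)).
  apply/eqP; rewrite -subr_eq0; apply/eqP; rewrite -[RHS]Eb /D; ring.
have ha : a = - ((2 * x + 8 * x * y ^+ 2) * u ^+ 2 - 2 * x * u - 8 * x * y ^+ 2) / D.
  by rewrite -Ea' mulrAC divff // mul1r.
have hb : b = - (8 * x ^+ 2 * y * (u ^+ 2 - 1)) / D.
  by rewrite -Eb' mulrAC divff // mul1r.
rewrite ha hb /D.
field.
by rewrite h1 h2 -/D hD.
Qed.
End Jac.

Section Om.
Context {R : realType}.
Notation V := (R * R)%type.
Implicit Types (x y : R) (p : V).

Definition ctat (f : V -> R) p := {for p, continuous f}.
Lemma ctC p (c : R) : ctat (fun _ => c) p.
Proof. exact: cvg_cst. Qed.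
Lemma ctfst p : ctat (fun q : V => q.1) p.
Proof. exact: cvg_fst. Qed.
Lemma ctsnd p : ctat (fun q : V => q.2) p.
Proof. exact: cvg_snd. Qed.
Lemma ctD p f g : ctat f p -> ctat g p -> ctat (fun q => f q + g q) p.
Proof. by move=> a b; apply: cvgD. Qed.
Lemma ctB p f g : ctat f p -> ctat g p -> ctat (fun q => f q - g q) p.
Proof. by move=> a b; apply: cvgB. Qed.
Lemma ctM p f g : ctat f p -> ctat g p -> ctat (fun q => f q * g q) p.
Proof. by move=> a b; apply: cvgM. Qed.
Lemma ctV p f : f p != 0 -> ctat f p -> ctat (fun q => (f q)^-1) p.
Proof. by move=> h a; apply: cvgV. Qed.
Lemma ctX2 p f : ctat f p -> ctat (fun q => f q ^+ 2) p.
Proof. by move=> a; apply: (ctM a a). Qed.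
Lemma ctS p f : ctat f p -> ctat (fun q => Num.sqrt (f q)) p.
Proof. by move=> a; apply: (continuous_comp a); apply: sqrt_continuous. Qed.
Lemma ctN p f : ctat f p -> ctat (fun q => `|f q|) p.
Proof. by move=> a; apply: cvg_norm. Qed.

Lemma k2_ge0 (k a b : R) : 0 <= k -> 0 <= k * a ^+ 2 * b ^+ 2.
Proof. by move=> k0; apply: mulr_ge0; [apply: mulr_ge0 => //|]; exact: sqr_ge0. Qed.

Lemma Delta_eq x y : Delta x y = (x^+2 - 4)^+2 + 4 * r1sq x y * (4 * x^+2 * y^+2).
Proof. rewrite /Delta /r1sq; ring. Qed.
Lemma r1sq_gt0 x y : 0 < r1sq x y.
Proof.
have h : 0 <= 4 * x ^+ 2 * y ^+ 2 by apply: k2_ge0.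
have := sqr_ge0 x; rewrite /r1sq; lra.
Qed.
Lemma Delta_ge0 x y : 0 <= Delta x y.
Proof.
have h : 0 <= 8 * x ^+ 2 * y ^+ 2 by apply: k2_ge0.
rewrite /Delta; apply: mulr_ge0; apply: addr_ge0 => //; exact: sqr_ge0.
Qed.
Lemma Delta_gt0 x y : 0 < x -> x != 2 -> 0 < Delta x y.
Proof.
move=> x0 x2.
have h : 0 <= 8 * x ^+ 2 * y ^+ 2 by apply: k2_ge0.
have h1 : 0 < (x + 2)^+2 by rewrite exprn_gt0 //; lra.
have h2 : 0 < (x - 2)^+2 by rewrite exprn_even_gt0 //= subr_eq0.
rewrite /Delta; apply: mulr_gt0; lra.
Qed.

Definition sD x y := Num.sqrt (Delta x y).
Lemma sD_ge0 x y : 0 <= sD x y.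
Proof. exact: sqrtr_ge0. Qed.
Lemma sD_sq x y : sD x y ^+ 2 = (x^+2 - 4)^+2 + 4 * r1sq x y * (4 * x^+2 * y^+2).
Proof. by rewrite /sD sqr_sqrtr ?Delta_ge0 // Delta_eq. Qed.
Lemma sD_gt0 x y : 0 < x -> x != 2 -> 0 < sD x y.
Proof. by move=> x0 x2; rewrite /sD sqrtr_gt0 Delta_gt0. Qed.

Lemma omp_eq x y : 2 * r1sq x y * omega_plus x y = x^+2 - 4 + sD x y.
Proof. rewrite /omega_plus /sD; field.
by have := r1sq_gt0 x y; rewrite /r1sq => /lt0r_neq0. Qed.
Lemma omm_eq x y : 2 * r1sq x y * omega_minus x y = x^+2 - 4 - sD x y.
Proof. rewrite /omega_minus /sD; field.
by have := r1sq_gt0 x y; rewrite /r1sq => /lt0r_neq0. Qed.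

Lemma quad_gen (c b d s w : R) : 0 < c -> s ^+ 2 = b ^+ 2 + 4 * c * d ->
  (2 * c * w = b + s \/ 2 * c * w = b - s) -> c * w ^+ 2 - b * w - d = 0.
Proof.
move=> c0 hs hw.
have h : 4 * c * (c * w ^+ 2 - b * w - d) = 0.
  have -> : 4 * c * (c * w ^+ 2 - b * w - d) = (2 * c * w - b)^+2 - (b^+2 + 4 * c * d) by ring.
  by case: hw => ->; rewrite -hs; ring.
have c4 : 4 * c != 0 by apply: lt0r_neq0; lra.
by apply: (mulfI c4); rewrite mulr0.
Qed.

Lemma omp_P x y : r1sq x y * omega_plus x y ^+ 2 - (x^+2 - 4) * omega_plus x y - 4 * x^+2 * y^+2 = 0.
Proof.
have := @quad_gen (r1sq x y) (x^+2-4) (4 * x^+2 * y^+2) (sD x y) (omega_plus x y) (r1sq_gt0 x y) (sD_sq x y).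
by rewrite omp_eq mulrA; apply; left.
Qed.
Lemma omm_P x y : r1sq x y * omega_minus x y ^+ 2 - (x^+2 - 4) * omega_minus x y - 4 * x^+2 * y^+2 = 0.
Proof.
have := @quad_gen (r1sq x y) (x^+2-4) (4 * x^+2 * y^+2) (sD x y) (omega_minus x y) (r1sq_gt0 x y) (sD_sq x y).
by rewrite omm_eq mulrA; apply; right.
Qed.

Lemma sD_absb x y : `|x^+2 - 4| <= sD x y.
Proof.
have s0 := sD_ge0 x y; have hs := sD_sq x y.
have : 0 <= 4 * r1sq x y * (4 * x^+2 * y^+2).
  by apply: mulr_ge0; [apply: mulr_ge0 => //; exact/ltW/r1sq_gt0|nra].
move=> h.
rewrite -(ger0_norm s0); rewrite -ler_sqr ?normr_ge0 // !real_normK ?num_real //.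
lra.
Qed.

Lemma omp_range x y : 0 <= omega_plus x y /\ omega_plus x y < 1.
Proof.
have e := omp_eq x y; have c0 := r1sq_gt0 x y; have s0 := sD_ge0 x y; have hs := sD_sq x y.
have hb := sD_absb x y.
move: e c0 s0 hs hb; rewrite /r1sq.
set w := omega_plus x y; set s := sD x y => e c0 s0 hs hb.
have h1 : 0 <= x^+2 - 4 + s by move: hb; rewrite ler_norml; lra.
have h2 : s < 2 * (4 + x ^+ 2 + 4 * x ^+ 2 * y ^+ 2) - (x^+2 - 4).
  have p0 : 0 < 2 * (4 + x ^+ 2 + 4 * x ^+ 2 * y ^+ 2) - (x^+2 - 4) by nra.
  rewrite -(ltr_pXn2r (n := 2)) //; last exact: ltW.
  rewrite hs; nra.
split; nra.
Qed.

Lemma omm_range x y : 0 < x -> -1 < omega_minus x y /\ omega_minus x y <= 0.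
Proof.
move=> x0.
have e := omm_eq x y; have c0 := r1sq_gt0 x y; have s0 := sD_ge0 x y; have hs := sD_sq x y.
have hb := sD_absb x y.
move: e c0 s0 hs hb; rewrite /r1sq.
set w := omega_minus x y; set s := sD x y => e c0 s0 hs hb.
have h1 : x^+2 - 4 - s <= 0 by move: hb; rewrite ler_norml; lra.
have h2 : s < 2 * (4 + x ^+ 2 + 4 * x ^+ 2 * y ^+ 2) + (x^+2 - 4).
  have p0 : 0 < 2 * (4 + x ^+ 2 + 4 * x ^+ 2 * y ^+ 2) + (x^+2 - 4) by nra.
  rewrite -(ltr_pXn2r (n := 2)) //; last exact: ltW.
  rewrite hs.
  have : 0 < x^+2 by nra.
  nra.
split; nra.
Qed.

Lemma r1_diff p : is_diff p (fun q : V => r1sq q.1 q.2)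
  (fun v => 0 + (p.1 * v.1 + p.1 * v.1) + (4 * p.1 ^+ 2 * (p.2 * v.2 + p.2 * v.2) + p.2 ^+ 2 * (4 * (p.1 * v.1 + p.1 * v.1) + p.1 ^+ 2 * 0))).
Proof. exact: (idD (idD (idC p 4) (idX2 (idfst p))) (idM (idM (idC p 4) (idX2 (idfst p))) (idX2 (idsnd p)))). Qed.

Lemma Delta_diff p : exists dD, is_diff p (fun q : V => Delta q.1 q.2) dD.
Proof.
eexists.
exact: (idM (idD (idX2 (idD (idfst p) (idC p 2))) (idM (idM (idC p 8) (idX2 (idfst p))) (idX2 (idsnd p))))
            (idD (idX2 (idB (idfst p) (idC p 2))) (idM (idM (idC p 8) (idX2 (idfst p))) (idX2 (idsnd p))))).
Qed.

Lemma omp_diff p : 0 < Delta p.1 p.2 -> exists dw, is_diff p (fun q : V => omega_plus q.1 q.2) dw.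
Proof.
move=> hD; have [dD HD] := Delta_diff p.
have h2 : (fun q : V => 2 * r1sq q.1 q.2) p != 0.
  by apply: lt0r_neq0; rewrite /= mulr_gt0 // r1sq_gt0.
eexists.
exact: (idM (idD (idB (idX2 (idfst p)) (idC p 4)) (idsqrt hD HD)) (idV h2 (idM (idC p 2) (r1_diff p)))).
Qed.

Lemma omm_diff p : 0 < Delta p.1 p.2 -> exists dw, is_diff p (fun q : V => omega_minus q.1 q.2) dw.
Proof.
move=> hD; have [dD HD] := Delta_diff p.
have h2 : (fun q : V => 2 * r1sq q.1 q.2) p != 0.
  by apply: lt0r_neq0; rewrite /= mulr_gt0 // r1sq_gt0.
eexists.
exact: (idM (idB (idB (idX2 (idfst p)) (idC p 4)) (idsqrt hD HD)) (idV h2 (idM (idC p 2) (r1_diff p)))).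
Qed.

Lemma r1_ct p : ctat (fun q : V => r1sq q.1 q.2) p.
Proof. exact: (ctD (ctD (@ctC p 4) (ctX2 (ctfst p))) (ctM (ctM (@ctC p 4) (ctX2 (ctfst p))) (ctX2 (ctsnd p)))). Qed.
Lemma Delta_ct p : ctat (fun q : V => Delta q.1 q.2) p.
Proof.
exact: (ctM (ctD (ctX2 (ctD (ctfst p) (@ctC p 2))) (ctM (ctM (@ctC p 8) (ctX2 (ctfst p))) (ctX2 (ctsnd p))))
            (ctD (ctX2 (ctB (ctfst p) (@ctC p 2))) (ctM (ctM (@ctC p 8) (ctX2 (ctfst p))) (ctX2 (ctsnd p))))).
Qed.
Lemma omp_ct p : ctat (fun q : V => omega_plus q.1 q.2) p.
Proof.
have h2 : (fun q : V => 2 * r1sq q.1 q.2) p != 0.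
  by apply: lt0r_neq0; rewrite /= mulr_gt0 // r1sq_gt0.
exact: (ctM (ctD (ctB (ctX2 (ctfst p)) (@ctC p 4)) (ctS (Delta_ct p))) (ctV h2 (ctM (@ctC p 2) (r1_ct p)))).
Qed.
Lemma omm_ct p : ctat (fun q : V => omega_minus q.1 q.2) p.
Proof.
have h2 : (fun q : V => 2 * r1sq q.1 q.2) p != 0.
  by apply: lt0r_neq0; rewrite /= mulr_gt0 // r1sq_gt0.
exact: (ctM (ctB (ctB (ctX2 (ctfst p)) (@ctC p 4)) (ctS (Delta_ct p))) (ctV h2 (ctM (@ctC p 2) (r1_ct p)))).
Qed.

Lemma omm_le0 x y : omega_minus x y <= 0.
Proof.
have e := omm_eq x y; have c0 := r1sq_gt0 x y; have hb := sD_absb x y.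
move: e c0 hb; set w := omega_minus x y; set s := sD x y; set c := r1sq x y => e c0 hb.
have h1 : x^+2 - 4 - s <= 0 by move: hb; rewrite ler_norml; lra.
nra.
Qed.
End Om.

Unset Implicit Arguments.
Section W.
Context {R : realType}.
Notation V := (R * R)%type.
Implicit Types (p : V).

Lemma ct_pair p (f1 f2 : V -> R) : ctat f1 p -> ctat f2 p ->
  {for p, continuous (fun q => (f1 q, f2 q))}.
Proof. by move=> a b; apply: (cvg_pair a b). Qed.

Definition wp (q : V) : R := omega_plus q.1 q.2.
Definition wm (q : V) : R := omega_minus q.1 q.2.

Lemma Wp_eq : @W_plus R = fun q => ((1 + wp q) / (1 - wp q) * q.1, 1 * wp q / (1 + wp q) * q.2).
Proof.
apply/funext => q; rewrite /W_plus /Wmap /wp /= mul1r ger0_norm //.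
exact: (omp_range q.1 q.2).1.
Qed.

Lemma Wm_eq : @W_minus R = fun q => ((1 + wm q) / (1 - wm q) * q.1, -1 * wm q / (1 + wm q) * q.2).
Proof.
apply/funext => q; rewrite /W_minus /Wmap /wm /= mulN1r ler0_norm //.
exact: omm_le0.
Qed.

Lemma Wp_ct p : {for p, continuous (@W_plus R)}.
Proof.
rewrite Wp_eq.
have [h0 h1] := omp_range p.1 p.2.
have n1 : (fun q => 1 - wp q) p != 0 by apply: lt0r_neq0; rewrite /wp /=; lra.
have n2 : (fun q => 1 + wp q) p != 0 by apply: lt0r_neq0; rewrite /wp /=; lra.
have cw : ctat wp p := omp_ct p.
apply: ct_pair.
  exact: (ctM (ctM (ctD (@ctC _ p 1) cw) (ctV n1 (ctB (@ctC _ p 1) cw))) (ctfst p)).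
exact: (ctM (ctM (ctM (@ctC _ p 1) cw) (ctV n2 (ctD (@ctC _ p 1) cw))) (ctsnd p)).
Qed.

Lemma Wm_ct p : 0 < p.1 -> {for p, continuous (@W_minus R)}.
Proof.
move=> x0; rewrite Wm_eq.
have [h0 h1] := @omm_range _ p.1 p.2 x0.
have n1 : (fun q => 1 - wm q) p != 0 by apply: lt0r_neq0; rewrite /wm /=; lra.
have n2 : (fun q => 1 + wm q) p != 0 by apply: lt0r_neq0; rewrite /wm /=; lra.
have cw : ctat wm p := omm_ct p.
apply: ct_pair.
  exact: (ctM (ctM (ctD (@ctC _ p 1) cw) (ctV n1 (ctB (@ctC _ p 1) cw))) (ctfst p)).
exact: (ctM (ctM (ctM (@ctC _ p (-1)) cw) (ctV n2 (ctD (@ctC _ p 1) cw))) (ctsnd p)).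
Qed.

Lemma Qnn (x y w D : R) : 0 <= w * D -> -1 < w -> w < 1 ->
  0 <= w * (1 - w ^+ 2) * D + 8 * x ^+ 2 * y ^+ 2 * (1 - w ^+ 2) * (1 + w)
       + 4 * x ^+ 2 * w ^+ 2 * (1 - w).
Proof.
move=> wD w1 w2.
have a : 0 <= 1 - w ^+ 2 by nra.
have t1 : 0 <= (w * D) * (1 - w ^+ 2) by apply: mulr_ge0.
have t2 : 0 <= (8 * x ^+ 2 * y ^+ 2) * ((1 - w ^+ 2) * (1 + w)).
  apply: mulr_ge0; first exact: k2_ge0.
  apply: mulr_ge0 => //; lra.
have t3 : 0 <= (4 * x ^+ 2 * w ^+ 2) * (1 - w).
  apply: mulr_ge0; first exact: k2_ge0.
  lra.
have -> : w * (1 - w ^+ 2) * D = (w * D) * (1 - w ^+ 2) by ring.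
have -> : 8 * x ^+ 2 * y ^+ 2 * (1 - w ^+ 2) * (1 + w) = (8 * x ^+ 2 * y ^+ 2) * ((1 - w ^+ 2) * (1 + w)) by ring.
lra.
Qed.

Lemma sign_pos (j M Q : R) : j * M = Q -> 0 < M -> 0 <= Q -> 0 <= j.
Proof. move=> e M0 Q0; rewrite -(pmulr_lge0 _ M0) e //. Qed.

Lemma Wp_jac p : 0 < p.1 -> p.1 != 2 ->
  differentiable (@W_plus R) p /\ 0 <= jac_det (@W_plus R) p.
Proof.
move=> x0 x2; rewrite Wp_eq.
have hD := @Delta_gt0 _ p.1 p.2 x0 x2.
have [dw Hw] := omp_diff p hD.
have HP : forall q : V, r1sq q.1 q.2 * wp q ^+ 2 - (q.1 ^+ 2 - 4) * wp q - 4 * q.1 ^+ 2 * q.2 ^+ 2 = 0.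
  by move=> q; exact: omp_P.
have [h0 h1] := omp_range p.1 p.2.
have n1 : 1 - wp p != 0 by apply: lt0r_neq0; rewrite /wp; lra.
have n2 : 1 + wp p != 0 by apply: lt0r_neq0; rewrite /wp; lra.
have eD : 2 * r1sq p.1 p.2 * wp p - (p.1 ^+ 2 - 4) = sD p.1 p.2.
  rewrite /wp omp_eq; ring.
have sp := @sD_gt0 _ p.1 p.2 x0 x2.
have nD : 2 * r1sq p.1 p.2 * wp p - (p.1 ^+ 2 - 4) != 0 by rewrite eD; exact: lt0r_neq0.
have [dF J] := jac_gen 1 Hw HP n1 n2 nD.
split; first exact: dF.
move: J; rewrite eD mul1r => J.
apply: (sign_pos _ _ _ J).
  apply: mulr_gt0; last lra.
  apply: mulr_gt0 => //; apply: exprn_gt0; lra.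
apply: Qnn; [apply: mulr_ge0 => //; exact: ltW|lra|lra].
Qed.

Lemma Wm_jac p : 0 < p.1 -> p.1 != 2 ->
  differentiable (@W_minus R) p /\ 0 <= jac_det (@W_minus R) p.
Proof.
move=> x0 x2; rewrite Wm_eq.
have hD := @Delta_gt0 _ p.1 p.2 x0 x2.
have [dw Hw] := omm_diff p hD.
have HP : forall q : V, r1sq q.1 q.2 * wm q ^+ 2 - (q.1 ^+ 2 - 4) * wm q - 4 * q.1 ^+ 2 * q.2 ^+ 2 = 0.
  by move=> q; exact: omm_P.
have [h0 h1] := @omm_range _ p.1 p.2 x0.
have n1 : 1 - wm p != 0 by apply: lt0r_neq0; rewrite /wm; lra.
have n2 : 1 + wm p != 0 by apply: lt0r_neq0; rewrite /wm; lra.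
have eD : 2 * r1sq p.1 p.2 * wm p - (p.1 ^+ 2 - 4) = - sD p.1 p.2.
  rewrite /wm omm_eq; ring.
have sp := @sD_gt0 _ p.1 p.2 x0 x2.
have nD : 2 * r1sq p.1 p.2 * wm p - (p.1 ^+ 2 - 4) != 0 by rewrite eD oppr_eq0; exact: lt0r_neq0.
have [dF J] := jac_gen (-1) Hw HP n1 n2 nD.
split; first exact: dF.
move: J; rewrite eD; set j := jac_det _ _ => J.
have J' : j *
  (sD p.1 p.2 * (1 - wm p) ^+ 2 * (1 + wm p)) =
  (wm p * (1 - wm p ^+ 2) * (- sD p.1 p.2) + 8 * p.1 ^+ 2 * p.2 ^+ 2 * (1 - wm p ^+ 2) * (1 + wm p) +
   4 * p.1 ^+ 2 * wm p ^+ 2 * (1 - wm p)).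
  rewrite /wm; lra.
move: J'; rewrite /wm => J'.
apply: (sign_pos _ _ _ J').
  apply: mulr_gt0; last lra.
  apply: mulr_gt0 => //; apply: exprn_gt0; lra.
apply: Qnn; [rewrite mulrN -mulNr; apply: mulr_ge0; [lra|exact: ltW]|lra|lra].
Qed.
End W.

Section Alg.
Context {R : realType}.

Lemma img_gen (x y t k : R) : 0 < t -> 4 * t ^+ 2 * k ^+ 2 = (t - 1) ^+ 2 ->
  0 <= 16 * t^+2 - 4 * (t-1)^+2 * y ^+ 2 - t^+2 * (t-1)^+2 * (x^+2 * y ^+ 2) - 2 * (t-1)^+4 * (x^+2 * y ^+ 2) * y ^+ 2 ->
  0 <= 4 - 4 * (k * y) ^+ 2 - (t * x) ^+ 2 * (k * y) ^+ 2 - 8 * (t * x) ^+ 2 * (k * y) ^+ 4.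
Proof.
move=> t0 hk h.
have e : 4 * t ^+ 2 * (4 - 4 * (k * y) ^+ 2 - (t * x) ^+ 2 * (k * y) ^+ 2 - 8 * (t * x) ^+ 2 * (k * y) ^+ 4)
  = 16 * t ^+ 2 - 4 * (4 * t ^+ 2 * k ^+ 2) * y ^+ 2 - t ^+ 2 * x ^+ 2 * (4 * t ^+ 2 * k ^+ 2) * y ^+ 2
    - 2 * x ^+ 2 * (4 * t ^+ 2 * k ^+ 2) ^+ 2 * y ^+ 4 by ring.
rewrite hk in e.
have e2 : 16 * t ^+ 2 - 4 * (t - 1) ^+ 2 * y ^+ 2 - t ^+ 2 * x ^+ 2 * (t - 1) ^+ 2 * y ^+ 2 -
    2 * x ^+ 2 * ((t - 1) ^+ 2) ^+ 2 * y ^+ 4 =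
    16 * t^+2 - 4 * (t-1)^+2 * y ^+ 2 - t^+2 * (t-1)^+2 * (x^+2 * y ^+ 2) - 2 * (t-1)^+4 * (x^+2 * y ^+ 2) * y ^+ 2 by ring.
rewrite e2 in e.
have t2 : 0 < 4 * t ^+ 2 by apply: mulr_gt0 => //; apply: exprn_gt0.
by rewrite -(pmulr_rge0 _ t2) e.
Qed.

Lemma t_rel (x y w : R) : w != 1 ->
  r1sq x y * w ^+ 2 - (x ^+ 2 - 4) * w - 4 * x ^+ 2 * y ^+ 2 = 0 ->
  ((1 + w) / (1 - w) - 1) * (4 * ((1 + w) / (1 - w)) - x ^+ 2) = 8 * ((1 + w) / (1 - w)) * (x ^+ 2 * y ^+ 2).
Proof.
move=> w1 P.
have w1' : 1 - w != 0 by rewrite subr_eq0 eq_sym.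
apply/eqP; rewrite -subr_eq0; apply/eqP.
transitivity (2 * (r1sq x y * w ^+ 2 - (x ^+ 2 - 4) * w - 4 * x ^+ 2 * y ^+ 2) / (1 - w) ^+ 2).
  rewrite /r1sq; field; exact: w1'.
by rewrite P mulr0 mul0r.
Qed.

Lemma phi_rel (t x y Z e : R) : e ^+ 2 = 1 ->
  (t - 1) * (4 * t - x ^+ 2) = 8 * t * (x ^+ 2 * y ^+ 2) -> (t - 1) * y = 2 * e * t * Z ->
  (t - 1) ^+ 3 * (4 * t ^+ 3 - (t * x) ^+ 2) = 32 * t ^+ 3 * (t * x) ^+ 2 * Z ^+ 2.
Proof.
move=> e2 E Hz.
transitivity (((t - 1) * (4 * t - x ^+ 2)) * ((t - 1) ^+ 2 * t ^+ 2)); first by ring.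
rewrite E.
transitivity (8 * t ^+ 3 * x ^+ 2 * ((t - 1) * y) ^+ 2); first by ring.
rewrite Hz.
transitivity (32 * t ^+ 5 * x ^+ 2 * Z ^+ 2 * e ^+ 2); first by ring.
rewrite e2; ring.
Qed.

Lemma cube_le (a b : R) : 0 <= a -> a <= b -> a ^+ 3 <= b ^+ 3.
Proof. by move=> a0 ab; rewrite lerXn2r // ?nnegrE //; apply: le_trans ab. Qed.
Lemma cube_lt (a b : R) : 0 <= a -> a < b -> a ^+ 3 < b ^+ 3.
Proof. by move=> a0 ab; rewrite ltrXn2r // ?nnegrE //; apply: le_trans (ltW ab). Qed.

Lemma mono_plus (t1 t2 X V : R) : 1 <= t1 -> t1 < t2 -> X ^+ 2 <= 4 * t1 ^+ 3 -> 0 <= V ->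
  (t1 - 1) ^+ 3 * (4 * t1 ^+ 3 - X ^+ 2) = 32 * t1 ^+ 3 * X ^+ 2 * V ->
  (t2 - 1) ^+ 3 * (4 * t2 ^+ 3 - X ^+ 2) = 32 * t2 ^+ 3 * X ^+ 2 * V -> False.
Proof.
move=> t1g t12 hX V0 P1 P2.
have L : ((t1 - 1) * t2) ^+ 3 * (4 * t1 ^+ 3 - X ^+ 2) = ((t2 - 1) * t1) ^+ 3 * (4 * t2 ^+ 3 - X ^+ 2).
  transitivity (((t1 - 1) ^+ 3 * (4 * t1 ^+ 3 - X ^+ 2)) * t2 ^+ 3); first by ring.
  rewrite P1.
  transitivity (((t2 - 1) ^+ 3 * (4 * t2 ^+ 3 - X ^+ 2)) * t1 ^+ 3); last by ring.
  rewrite P2; ring.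
have A10 : 0 <= (t1 - 1) * t2 by apply: mulr_ge0; lra.
have A12 : (t1 - 1) * t2 <= (t2 - 1) * t1 by nra.
have c1 := cube_le _ _ A10 A12.
have a10 : 0 <= 4 * t1 ^+ 3 - X ^+ 2 by lra.
have t13 : t1 ^+ 3 < t2 ^+ 3 by apply: cube_lt => //; lra.
have a12 : 4 * t1 ^+ 3 - X ^+ 2 < 4 * t2 ^+ 3 - X ^+ 2 by lra.
have A2 : 0 < ((t2 - 1) * t1) ^+ 3 by apply: exprn_gt0; apply: mulr_gt0; lra.
have s1 := ler_wpM2r a10 c1.
have s2 : ((t2 - 1) * t1) ^+ 3 * (4 * t1 ^+ 3 - X ^+ 2) < ((t2 - 1) * t1) ^+ 3 * (4 * t2 ^+ 3 - X ^+ 2) by rewrite ltr_pM2l.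
move: s2; rewrite -L => s2.
have := le_lt_trans s1 s2; rewrite ltxx //.
Qed.

Lemma mono_minus (t1 t2 X V : R) : 0 < t1 -> t1 < t2 -> t2 <= 1 -> 4 * t2 ^+ 3 <= X ^+ 2 -> 0 <= V ->
  (t1 - 1) ^+ 3 * (4 * t1 ^+ 3 - X ^+ 2) = 32 * t1 ^+ 3 * X ^+ 2 * V ->
  (t2 - 1) ^+ 3 * (4 * t2 ^+ 3 - X ^+ 2) = 32 * t2 ^+ 3 * X ^+ 2 * V -> False.
Proof.
move=> t10 t12 t21 hX V0 P1 P2.
have L : ((1 - t1) * t2) ^+ 3 * (X ^+ 2 - 4 * t1 ^+ 3) = ((1 - t2) * t1) ^+ 3 * (X ^+ 2 - 4 * t2 ^+ 3).
  transitivity (((t1 - 1) ^+ 3 * (4 * t1 ^+ 3 - X ^+ 2)) * t2 ^+ 3); first by ring.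
  rewrite P1.
  transitivity (((t2 - 1) ^+ 3 * (4 * t2 ^+ 3 - X ^+ 2)) * t1 ^+ 3); last by ring.
  rewrite P2; ring.
have B20 : 0 <= (1 - t2) * t1 by apply: mulr_ge0; lra.
have B21 : (1 - t2) * t1 <= (1 - t1) * t2 by nra.
have c1 := cube_le _ _ B20 B21.
have b20 : 0 <= X ^+ 2 - 4 * t2 ^+ 3 by lra.
have t13 : t1 ^+ 3 < t2 ^+ 3 by apply: cube_lt => //; lra.
have b21 : X ^+ 2 - 4 * t2 ^+ 3 < X ^+ 2 - 4 * t1 ^+ 3 by lra.
have B1 : 0 < ((1 - t1) * t2) ^+ 3 by apply: exprn_gt0; apply: mulr_gt0; lra.
have s1 := ler_wpM2r b20 c1.
have s2 : ((1 - t1) * t2) ^+ 3 * (X ^+ 2 - 4 * t2 ^+ 3) < ((1 - t1) * t2) ^+ 3 * (X ^+ 2 - 4 * t1 ^+ 3) by rewrite ltr_pM2l.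
move: s2; rewrite L => s2.
have := le_lt_trans s1 s2; rewrite ltxx //.
Qed.

Lemma inj_t (e t1 t2 x1 x2 y1 y2 Z : R) : e ^+ 2 = 1 -> 0 < t1 -> 0 < t2 -> 0 < x1 -> 0 < x2 ->
  (t1 - 1) * (4 * t1 - x1 ^+ 2) = 8 * t1 * (x1 ^+ 2 * y1 ^+ 2) ->
  (t2 - 1) * (4 * t2 - x2 ^+ 2) = 8 * t2 * (x2 ^+ 2 * y2 ^+ 2) ->
  (t1 - 1) * y1 = 2 * e * t1 * Z -> (t2 - 1) * y2 = 2 * e * t2 * Z ->
  t1 * x1 = t2 * x2 ->
  (1 <= t1 /\ 1 <= t2 /\ x1 <= 2 /\ x2 <= 2) \/ (t1 <= 1 /\ t2 <= 1 /\ 2 <= x1 /\ 2 <= x2) ->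
  [/\ t1 = t2, x1 = x2 & y1 = y2].
Proof.
move=> e2 t10 t20 x10 x20 E1 E2 Z1 Z2 HX side.
have P1 := phi_rel _ _ _ _ _ e2 E1 Z1.
have P2 := phi_rel _ _ _ _ _ e2 E2 Z2.
rewrite -HX in P2.
set X := t1 * x1 in P1 P2 HX.
have V0 : 0 <= Z ^+ 2 := sqr_ge0 Z.
have tt : t1 = t2.
  case: (ltgtP t1 t2) => // h; exfalso.
  - case: side => [[a [b [c d]]]|[a [b [c d]]]].
    + apply: (mono_plus _ _ _ _ a h _ V0 P1 P2).
      rewrite /X exprMn.
      have : x1 ^+ 2 <= 4 by nra.
      have : t1 ^+ 2 <= t1 ^+ 3 by rewrite [in X in _ <= X]exprS; nra.
      have : 0 <= t1 ^+ 2 by exact: sqr_ge0.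
      nra.
    + apply: (mono_minus _ _ _ _ t10 h b _ V0 P1 P2).
      rewrite HX exprMn.
      have : 4 <= x2 ^+ 2 by nra.
      have : t2 ^+ 3 <= t2 ^+ 2 by rewrite [in X in X <= _]exprS; nra.
      have : 0 <= t2 ^+ 2 by exact: sqr_ge0.
      nra.
  - case: side => [[a [b [c d]]]|[a [b [c d]]]].
    + apply: (mono_plus _ _ _ _ b h _ V0 P2 P1).
      rewrite HX exprMn.
      have : x2 ^+ 2 <= 4 by nra.
      have : t2 ^+ 2 <= t2 ^+ 3 by rewrite [in X in _ <= X]exprS; nra.
      have : 0 <= t2 ^+ 2 by exact: sqr_ge0.
      nra.
    + apply: (mono_minus _ _ _ _ t20 h a _ V0 P2 P1).
      rewrite /X exprMn.
      have : 4 <= x1 ^+ 2 by nra.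
      have : t1 ^+ 3 <= t1 ^+ 2 by rewrite [in X in X <= _]exprS; nra.
      have : 0 <= t1 ^+ 2 by exact: sqr_ge0.
      nra.
rewrite -tt in HX Z2 E2.
have xx : x1 = x2 by apply: (mulfI (lt0r_neq0 t10)).
split => //.
rewrite -xx in E2.
have [t1e|t1n] := eqVneq t1 1.
  rewrite t1e subrr mul0r in E1 E2.
  have x0 : x1 ^+ 2 != 0 by apply: lt0r_neq0; apply: exprn_gt0.
  have : y1 ^+ 2 = 0.
    have /eqP : x1 ^+ 2 * y1 ^+ 2 = 0 by lra.
    by rewrite mulf_eq0 (negbTE x0) /= => /eqP.
  have : y2 ^+ 2 = 0.
    have /eqP : x1 ^+ 2 * y2 ^+ 2 = 0 by lra.
    by rewrite mulf_eq0 (negbTE x0) /= => /eqP.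
  move=> /eqP; rewrite sqrf_eq0 => /eqP -> /eqP; rewrite sqrf_eq0 => /eqP -> //.
apply: (mulfI (x := t1 - 1)); first by rewrite subr_eq0.
by rewrite Z1 Z2.
Qed.
End Alg.

Lemma inv_cont {T U : topologicalType} (hU : hausdorff_space U) (A : set T) (f : T -> U) (g : U -> T) :
  (forall a, A a -> {for a, continuous f}) ->
  (forall a, A a -> g (f a) = a) ->
  (forall p, A p -> exists K N, [/\ compact K, K `<=` A, nbhs (f p) N & forall a, A a -> N (f a) -> K a]) ->
  {within f @` A, continuous g}.
Proof.
move=> fc gK hK.
apply/subspace_continuousP => _ [p Ap <-].
rewrite /from_subspace /= gK //.
move=> Ub /=.
rewrite nbhsE.
case=> O [oO Op] OU.
have [K [N [cK KA nN KN]]] := hK p Ap.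
pose C := K `&` ~` O.
have cC : compact C by apply: compact_closedI => //; exact: open_closedC.
have CA : C `<=` A by move=> c [Kc _]; exact: KA.
have fC : {within C, continuous f}.
  by apply: continuous_in_subspaceT => c /set_mem Cc; apply: fc; exact: CA.
have cfC : closed (f @` C) by apply: compact_closed => //; exact: continuous_compact.
have nfC : nbhs (f p) (~` (f @` C)).
  apply: open_nbhs_nbhs; split; first exact: closed_openC.
  move=> [c Cc fcp].
  have cp : c = p by rewrite -(gK c (CA c Cc)) fcp gK.
  by case: Cc => _ /=; apply; rewrite cp.
apply: filterS (filterI nN nfC) => q [Nq nq] [a Aa faq].
rewrite /= -faq gK //; apply: OU.
have Ka : K a by apply: (KN a Aa); rewrite faq.
apply: contrapT => Oa; apply: nq; rewrite -faq; exists a => //.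
Qed.

Section I.
Context {R : realType}.
Lemma int_plus (p : R * R) : (@regionR_plus R)° p -> regionR_plus p /\ p.1 < 2.
Proof.
move=> hp; split; first exact: interior_subset.
move: hp; rewrite /interior /= => /nbhs_ballP [e /= e0 he].
have := he (p.1 + e / 2, p.2).
case.
  split => /=.
    rewrite -ball_normE /ball_ /=.
    have -> : p.1 - (p.1 + e / 2) = - (e / 2) by ring.
    rewrite normrN ger0_norm; lra.
  exact: ballxx.
move=> [_ /= h]. lra.
Qed.
Lemma int_minus (p : R * R) : (@regionR_minus R)° p -> regionR_minus p /\ 2 < p.1.
Proof.
move=> hp; split; first exact: interior_subset.
move: hp; rewrite /interior /= => /nbhs_ballP [e /= e0 he].
have := he (p.1 - e / 2, p.2).
case.
  split => /=.
    rewrite -ball_normE /ball_ /=.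
    have -> : p.1 - (p.1 - e / 2) = e / 2 by ring.
    rewrite ger0_norm; lra.
  exact: ballxx.
move=> [_ /= h]; lra.
Qed.
End I.

Section Fin.
Context {R : realType}.
Notation V := (R * R)%type.
Implicit Types (q : V).

Lemma e4 (y : R) : (y ^+ 2) ^+ 2 = y ^+ 4.
Proof. by rewrite -exprM. Qed.

Lemma reg_y2 q : regionR q -> q.2 ^+ 2 <= 1.
Proof.
move=> [x0 g].
have h1 : 0 <= q.1 ^+ 2 * q.2 ^+ 2 by apply: mulr_ge0; apply: sqr_ge0.
have h2 : 0 <= 8 * q.1 ^+ 2 * (q.2 ^+ 2) ^+ 2 by apply: k2_ge0.
rewrite e4 in h2; lra.
Qed.

Definition tw (w : R) := (1 + w) / (1 - w).

Lemma tw_facts x y w : -1 < w -> w < 1 ->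
  r1sq x y * w ^+ 2 - (x ^+ 2 - 4) * w - 4 * x ^+ 2 * y ^+ 2 = 0 ->
  [/\ 0 < tw w, (tw w - 1) * (4 * tw w - x ^+ 2) = 8 * tw w * (x ^+ 2 * y ^+ 2),
      tw w - 1 = 2 * w / (1 - w),
      w / (1 + w) = (tw w - 1) / (2 * tw w) & 4 * tw w ^+ 2 * ((tw w - 1) / (2 * tw w)) ^+ 2 = (tw w - 1) ^+ 2].
Proof.
move=> w1 w2 P.
have n1 : 1 - w != 0 by apply: lt0r_neq0; lra.
have n2 : 1 + w != 0 by apply: lt0r_neq0; lra.
have t0 : 0 < tw w by rewrite /tw divr_gt0 //; lra.
have tn : tw w != 0 by exact: lt0r_neq0.
split => //.
- apply: t_rel => //; apply/eqP => w1'; lra.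
- by rewrite /tw; field.
- by rewrite /tw; field; rewrite n1 n2.
- by field.
Qed.

Lemma Wp_val q : @W_plus R q = (tw (wp q) * q.1, (tw (wp q) - 1) / (2 * tw (wp q)) * q.2).
Proof.
rewrite Wp_eq /= mul1r.
have [h0 h1] := omp_range q.1 q.2.
have [_ _ _ e _] := tw_facts q.1 q.2 (wp q) ltac:(rewrite /wp; lra) h1 (omp_P q.1 q.2).
by rewrite e.
Qed.

Lemma pt_plus q : regionR_plus q ->
  [/\ 0 < tw (wp q), 1 <= tw (wp q), (tw (wp q) - 1) * (4 * tw (wp q) - q.1 ^+ 2) = 8 * tw (wp q) * (q.1 ^+ 2 * q.2 ^+ 2)
   & 4 * tw (wp q) ^+ 2 * ((tw (wp q) - 1) / (2 * tw (wp q))) ^+ 2 = (tw (wp q) - 1) ^+ 2].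
Proof.
move=> _.
have [h0 h1] := omp_range q.1 q.2.
have [t0 E e1 _ hk] := tw_facts q.1 q.2 (wp q) ltac:(rewrite /wp; lra) h1 (omp_P q.1 q.2).
split => //.
have : 0 <= 2 * wp q / (1 - wp q) by apply: divr_ge0; rewrite /wp; lra.
lra.
Qed.

Lemma img_plus q : regionR_plus q -> regionR (@W_plus R q).
Proof.
move=> hq; have [t0 t1 E hk] := pt_plus q hq.
case: hq => [[x0 g] x2].
rewrite Wp_val; split => /=; first exact: mulr_gt0.
apply: img_gen => //.
apply: imgp => //; first exact: sqr_ge0.
by rewrite e4.
Qed.

Lemma inj_plus : set_inj (@regionR_plus R) (@W_plus R).
Proof.
move=> a b /set_mem ha /set_mem hb; rewrite !Wp_val => -[hX hY].
have [ta0 ta1 Ea _] := pt_plus a ha.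
have [tb0 tb1 Eb _] := pt_plus b hb.
case: ha => [[xa0 _] xa2]; case: hb => [[xb0 _] xb2].
have e2 : (1 : R) ^+ 2 = 1 by rewrite expr1n.
have Za : (tw (wp a) - 1) * a.2 = 2 * 1 * tw (wp a) * ((tw (wp a) - 1) / (2 * tw (wp a)) * a.2).
  by field; exact: lt0r_neq0.
have Zb : (tw (wp b) - 1) * b.2 = 2 * 1 * tw (wp b) * ((tw (wp a) - 1) / (2 * tw (wp a)) * a.2).
  by rewrite hY; field; exact: lt0r_neq0.
have [_ h1 h2] := inj_t _ _ _ _ _ _ _ _ e2 ta0 tb0 xa0 xb0 Ea Eb Za Zb hX (or_introl (conj ta1 (conj tb1 (conj xa2 xb2)))).
by case: a b h1 h2 {Za Zb hX hY Ea Eb ta0 ta1 xa0 xa2 tb0 tb1 xb0 xb2} => [? ?] [? ?] /= -> ->.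
Qed.

Lemma ctXn p (f : V -> R) n : ctat f p -> ctat (fun q => f q ^+ n) p.
Proof. by move=> a; apply: (continuous_comp a (@exprn_continuous R n (f p))). Qed.

Definition gR q : R := 4 - 4 * q.2 ^+ 2 - q.1 ^+ 2 * q.2 ^+ 2 - 8 * q.1 ^+ 2 * q.2 ^+ 4.
Lemma gR_ct : continuous gR.
Proof.
move=> p.
exact: (ctB (ctB (ctB (@ctC _ p 4) (ctM (@ctC _ p 4) (ctX2 (ctsnd p)))) (ctM (ctX2 (ctfst p)) (ctX2 (ctsnd p))))
   (ctM (ctM (@ctC _ p 8) (ctX2 (ctfst p))) (ctXn _ _ 4 (ctsnd p)))).
Qed.

Lemma closed_pre (f : V -> R) (D : set R) : continuous f -> closed D -> closed (f @^-1` D).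
Proof. by move=> fc cD; apply: preimage_closed => // x _; apply: fc. Qed.

Lemma fst_ct : continuous (fun q : V => q.1).
Proof. by move=> p; apply: ctfst. Qed.

Definition Kset (a b : R) : set V :=
  (gR @^-1` [set x | 0 <= x]) `&` ((fun q : V => q.1) @^-1` [set x | a <= x])
    `&` ((fun q : V => q.1) @^-1` [set x | x <= b]).

Lemma Kset_compact a b : compact (Kset a b).
Proof.
have := @subclosed_compact _ (Kset a b) (`[a, b] `*` `[-1, 1]).
apply.
- apply: closedI; first apply: closedI.
  + exact: closed_pre gR_ct (@closed_ge _ 0).
  + exact: closed_pre fst_ct (@closed_ge _ a).
  + exact: closed_pre fst_ct (@closed_le _ b).
- by apply: compact_setX; apply: segment_compact.
- move=> q [[g1 g2] g3]; split => /=; rewrite in_itv /=; apply/andP; split => //.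
  + have : q.2 ^+ 2 <= 1.
      have h1 : 0 <= q.1 ^+ 2 * q.2 ^+ 2 by apply: mulr_ge0; apply: sqr_ge0.
      have h2 : 0 <= 8 * q.1 ^+ 2 * (q.2 ^+ 2) ^+ 2 by apply: k2_ge0.
      rewrite e4 in h2; move: g1; rewrite /= /gR; lra.
    nra.
  + have : q.2 ^+ 2 <= 1.
      have h1 : 0 <= q.1 ^+ 2 * q.2 ^+ 2 by apply: mulr_ge0; apply: sqr_ge0.
      have h2 : 0 <= 8 * q.1 ^+ 2 * (q.2 ^+ 2) ^+ 2 by apply: k2_ge0.
      rewrite e4 in h2; move: g1; rewrite /= /gR; lra.
    nra.
Qed.

Lemma left_inv (A : set V) (f : V -> V) : set_inj A f -> exists g, forall p, A p -> g (f p) = p.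
Proof.
move=> fi; exists (fun q => xget (0, 0) [set a | A a /\ f a = q]) => p Ap.
have [] := @xgetPex _ (0, 0) [set a | A a /\ f a = f p] (ex_intro _ p (conj Ap erefl)).
move=> Ax fx; apply: fi => //; exact/mem_set.
Qed.


Lemma small_plus q : regionR_plus q -> q.1 <= 1/2 -> tw (wp q) <= 3.
Proof.
move=> hq xs.
have y1 := reg_y2 q hq.1.
case: hq => [[x0 g] x2].
have [h0 h1] := omp_range q.1 q.2.
have P := omp_P q.1 q.2.
move: h0 h1 P; rewrite /tw /wp /r1sq; set w := omega_plus q.1 q.2 => h0 h1 P.
have c4 : 4 * w ^+ 2 <= (4 + q.1 ^+ 2 + 4 * q.1 ^+ 2 * q.2 ^+ 2) * w ^+ 2.
  have : 0 <= q.1 ^+ 2 + 4 * q.1 ^+ 2 * q.2 ^+ 2.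
    by apply: addr_ge0; [exact: sqr_ge0|apply: k2_ge0].
  have := sqr_ge0 w; nra.
have xw : (q.1 ^+ 2 - 4) * w <= 0.
  have : q.1 ^+ 2 <= 4 by nra.
  nra.
have d1 : 4 * q.1 ^+ 2 * q.2 ^+ 2 <= 4 * q.1 ^+ 2.
  have := sqr_ge0 q.1; nra.
have ww : w ^+ 2 <= q.1 ^+ 2 by lra.
have wx : w <= q.1 by rewrite -ler_sqr ?nnegrE //; lra.
rewrite ler_pdivrMr; lra.
Qed.

Lemma homeo_plus : orient_pres_homeo_onto_image (@regionR_plus R) (@W_plus R).
Proof.
split.
- by apply: continuous_in_subspaceT => p _; exact: Wp_ct.
- exact: inj_plus.
- have [g gK] := left_inv _ _ inj_plus.
  exists g; split => //.
  have hU : hausdorff_space (R * R)%type := @norm_hausdorff R (R * R)%type.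
  apply: (inv_cont hU (@regionR_plus R) (@W_plus R) g) => //.
    by move=> a _; exact: Wp_ct.
  move=> p Ap.
  have [X0 _] := img_plus p Ap.
  move: X0; set X := (W_plus p).1 => X0.
  pose d := X / (6 + 12 * X).
  have dX : d * (6 + 12 * X) = X by rewrite /d; field; apply: lt0r_neq0; lra.
  have d0 : 0 < d by rewrite /d divr_gt0 //; lra.
  have d1 : d <= 1/2 by nra.
  have d3 : 3 * d <= X / 2 by nra.
  exists (Kset d 2), ((fun q : V => q.1) @^-1` [set x | X / 2 < x]).
  split.
  + exact: Kset_compact.
  + move=> q [[g1 g2] g3]; rewrite /= in g1 g2 g3.
    split; [split; [lra|exact: g1]|exact: g3].
  + apply: (ctfst (W_plus p)); apply: open_nbhs_nbhs; split; first exact: open_gt.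
    change (X / 2 < X); lra.
  + move=> a Aa Na0.
    have Na : X / 2 < (W_plus a).1 := Na0.
    have [[a0 ga] a2] := Aa.
    split; [split|]; rewrite /=.
    * exact: ga.
    * rewrite leNgt; apply/negP => ad.
      have t3 := small_plus a Aa ltac:(lra).
      rewrite Wp_val /= in Na.
      have : tw (wp a) * a.1 <= 3 * a.1 by apply: ler_wpM2r; lra.
      lra.
    * exact: a2.
- move=> p /(int_plus p) [[[x0 _] _] x2]; apply: Wp_jac => //.
  by rewrite lt_eqF.
Qed.

Lemma Wm_val q : 0 < q.1 ->
  @W_minus R q = (tw (wm q) * q.1, - ((tw (wm q) - 1) / (2 * tw (wm q))) * q.2).
Proof.
move=> x0; rewrite Wm_eq /= mulN1r.
have [h0 h1] := @omm_range _ q.1 q.2 x0.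
have [_ _ _ e _] := tw_facts q.1 q.2 (wm q) h0 ltac:(rewrite /wm; lra) (omm_P q.1 q.2).
by rewrite mulNr e.
Qed.

Lemma pt_minus q : regionR_minus q ->
  [/\ 0 < tw (wm q), tw (wm q) <= 1, (tw (wm q) - 1) * (4 * tw (wm q) - q.1 ^+ 2) = 8 * tw (wm q) * (q.1 ^+ 2 * q.2 ^+ 2)
   & 4 * tw (wm q) ^+ 2 * (- ((tw (wm q) - 1) / (2 * tw (wm q)))) ^+ 2 = (tw (wm q) - 1) ^+ 2].
Proof.
move=> [[x0 _] _].
have [h0 h1] := @omm_range _ q.1 q.2 x0.
have [t0 E e1 _ hk] := tw_facts q.1 q.2 (wm q) h0 ltac:(rewrite /wm; lra) (omm_P q.1 q.2).
split => //; last by rewrite sqrrN.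
have : 0 <= - (2 * wm q) / (1 - wm q) by apply: divr_ge0; rewrite /wm; lra.
lra.
Qed.

Lemma img_minus q : regionR_minus q -> regionR (@W_minus R q).
Proof.
move=> hq; have [t0 t1 E hk] := pt_minus q hq.
case: hq => [[x0 g] x2].
rewrite Wm_val //; split => /=; first exact: mulr_gt0.
apply: img_gen => //.
apply: imgm => //; first exact: sqr_ge0.
by rewrite e4.
Qed.

Lemma inj_minus : set_inj (@regionR_minus R) (@W_minus R).
Proof.
move=> a b /set_mem ha /set_mem hb.
have [ta0 ta1 Ea _] := pt_minus a ha.
have [tb0 tb1 Eb _] := pt_minus b hb.
case: ha => [[xa0 _] xa2]; case: hb => [[xb0 _] xb2].
rewrite !Wm_val // => -[hX hY].
have e2 : (-1 : R) ^+ 2 = 1 by rewrite sqrrN expr1n.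
have Za : (tw (wm a) - 1) * a.2 = 2 * -1 * tw (wm a) * (- ((tw (wm a) - 1) / (2 * tw (wm a))) * a.2).
  by field; exact: lt0r_neq0.
have Zb : (tw (wm b) - 1) * b.2 = 2 * -1 * tw (wm b) * (- ((tw (wm a) - 1) / (2 * tw (wm a))) * a.2).
  by rewrite hY; field; exact: lt0r_neq0.
have [_ h1 h2] := inj_t _ _ _ _ _ _ _ _ e2 ta0 tb0 xa0 xb0 Ea Eb Za Zb hX (or_intror (conj ta1 (conj tb1 (conj xa2 xb2)))).
by case: a b h1 h2 {Za Zb hX hY Ea Eb ta0 ta1 xa0 xa2 tb0 tb1 xb0 xb2} => [? ?] [? ?] /= -> ->.
Qed.

Lemma large_minus q : regionR_minus q -> 1/4 <= tw (wm q).
Proof.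
move=> hq; have [t0 t1 E _] := pt_minus q hq.
case: hq => [[x0 g] x2].
move: t0 t1 E; set t := tw (wm q) => t0 t1 E.
set u := q.2 ^+ 2 in g E.
have u0 : 0 <= u by exact: sqr_ge0.
have x4 : 4 <= q.1 ^+ 2 by nra.
have m4 : 4 * u <= q.1 ^+ 2 * u by nra.
have g' : 0 <= 4 - 4 * u - (q.1 ^+ 2 * u) - 8 * (q.1 ^+ 2 * u) * u.
  by move: g; rewrite -/u -e4 -/u; lra.
have u4 : u <= 1/4 by nra.
have F : (1 - t) ^+ 2 * q.1 ^+ 2 <= 8 * t * (q.1 ^+ 2 * u).
  rewrite -E.
  have : 0 <= 1 - t by lra.
  have : 4 * t <= q.1 ^+ 2 * t by nra.
  nra.
have tu : (1 - t) ^+ 2 <= 8 * t * u.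
  have xx0 : 0 < q.1 ^+ 2 by nra.
  have : (1 - t) ^+ 2 * q.1 ^+ 2 <= (8 * t * u) * q.1 ^+ 2 by rewrite -mulrA [u * _]mulrC; lra.
  by rewrite ler_pM2r.
nra.
Qed.

Lemma homeo_minus : orient_pres_homeo_onto_image (@regionR_minus R) (@W_minus R).
Proof.
split.
- apply: continuous_in_subspaceT => p /set_mem [[x0 _] _]; exact: Wm_ct.
- exact: inj_minus.
- have [g gK] := left_inv _ _ inj_minus.
  exists g; split => //.
  have hU : hausdorff_space (R * R)%type := @norm_hausdorff R (R * R)%type.
  apply: (inv_cont hU (@regionR_minus R) (@W_minus R) g) => //.
    by move=> a [[a0 _] _]; exact: Wm_ct.
  move=> p Ap.
  have [X0 _] := img_minus p Ap.
  move: X0; set X := (W_minus p).1 => X0.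
  pose M := 4 * (X + 1).
  exists (Kset 2 M), ((fun q : V => q.1) @^-1` [set x | x < X + 1]).
  split.
  + exact: Kset_compact.
  + move=> q [[g1 g2] g3]; rewrite /= in g1 g2 g3.
    split; [split; [lra|exact: g1]|exact: g2].
  + apply: (ctfst (W_minus p)); apply: open_nbhs_nbhs; split; first exact: open_lt.
    change (X < X + 1); lra.
  + move=> a Aa Na0.
    have Na : (W_minus a).1 < X + 1 := Na0.
    have [[a0 ga] a2] := Aa.
    split; [split|]; rewrite /=.
    * exact: ga.
    * exact: a2.
    * rewrite leNgt; apply/negP => ad.
      have t4 := large_minus a Aa.
      rewrite Wm_val //= in Na.
      have : 1/4 * a.1 <= tw (wm a) * a.1 by apply: ler_wpM2r; lra.
      rewrite /M in ad.
      lra.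
- move=> p /(int_minus p) [[[x0 _] _] x2]; apply: Wm_jac => //.
  by rewrite gt_eqF.
Qed.

Theorem main_thm :
  [/\ orient_pres_homeo_onto_image (@regionR_plus R) (@W_plus R),
      (@W_plus R) @` (@regionR_plus R) `<=` @regionR R,
      orient_pres_homeo_onto_image (@regionR_minus R) (@W_minus R)
    & (@W_minus R) @` (@regionR_minus R) `<=` @regionR R].
Proof.
split.
- exact: homeo_plus.
- by move=> _ [p hp <-]; exact: img_plus.
- exact: homeo_minus.
- by move=> _ [p hp <-]; exact: img_minus.
Qed.
End Fin.


Theorem proposition4p3 (R : realType) :
  [/\ orient_pres_homeo_onto_image (@regionR_plus R) (@W_plus R),
      (@W_plus R) @` (@regionR_plus R) `<=` @regionR R,
      orient_pres_homeo_onto_image (@regionR_minus R) (@W_minus R)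
    & (@W_minus R) @` (@regionR_minus R) `<=` @regionR R].
Proof. exact: (@main_thm R). Qed.
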